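(* Let $G$ be a finite two-player zero-sum extensive form game with perfect recall, and run CFR or CFR$^+$ with alternating updates (Player 1 updated first) on $G$. Let $t\ge 0$ and let $p$ be the player about to be updated at time $t$, let $\sigma^t_p$ be $p$'s current strategy, and let $\sigma_o$ be the opponent strategy used in $p$'s update values, i.e. $\sigma_o=\sigma^t_2$ if $p=1$ and $\sigma_o=\sigma^{t+1}_1$ if $p=2$. Then for every information set $I$ of player $p$ and every $a\in A(I)$, $$v^{(\sigma^{t+1}_p,\sigma_o)}(I)_a\ge v^{(\sigma^t_p,\sigma_o)}(I)_a.$$
   Context: Extensive form game: a finite tree of histories $h$ (sequences of actions from the root $\emptyset$), terminal histories $Z$, actions $A(h)$ at nonterminal $h$, an acting player $P(h)\in\{1,2,c\}$ where $c$ is chance acting with fixed probabilities, utilities $u_1(z)=-u_2(z)$ at terminals, and for each player a partition of that player's histories into information sets $I$ (all $h\in I$ share the same legal actions $A(I)$). Perfect recall: any two histories in one information set of player $p$ pass through the same sequence of player-$p$ information sets and player-$p$ actions. A strategy $\sigma_p$ gives a distribution $\boldsymbol{\sigma}_p(I)$ over $A(I)$ for each player-$p$ information set. For a profile $\boldsymbol{\sigma}$ and terminal $z$, $\pi^{\boldsymbol\sigma}_{-p}(z)$ is the product of the probabilities of all actions on the path to $z$ taken by chance and by $p$'s opponent; for $h\sqsubseteq z$, $\pi^{\boldsymbol\sigma}_p(z\mid h)$ is the product of the probabilities under $\sigma_p$ of player $p$'s actions on the path from $h$ to $z$. Counterfactual values: $v^{\boldsymbol\sigma}_p(h):=\sum_{z\in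 Z,\,h\sqsubseteq z}\pi^{\boldsymbol\sigma}_{-p}(z)\pi^{\boldsymbol\sigma}_p(z\mid h)u_p(z)$, and for an information set $I$ of player $p$ the vector $\boldsymbol{v}^{\boldsymbol\sigma}(I)$ with components $v^{\boldsymbol\sigma}(I)_a:=\sum_{h\in I}v^{\boldsymbol\sigma}_p(ha)$, $a\in A(I)$. Let $x^+=\max(x,0)$ componentwise and $\boldsymbol{\sigma}_{\mathrm{rm}}(\boldsymbol{x}):=\boldsymbol{x}^+/(\boldsymbol{1}\cdot\boldsymbol{x}^+)$ if some $x_a>0$, else $\boldsymbol{1}/|A|$. CFR with alternating updates keeps for each information set $I$ a vector $\boldsymbol{r}^t(I)$ with $\boldsymbol{r}^0(I)=\boldsymbol 0$, plays $\boldsymbol\sigma^t(I)=\boldsymbol{\sigma}_{\mathrm{rm}}(\boldsymbol{r}^t(I))$, and updates $\boldsymbol{r}^{t+1}(I)=\boldsymbol{r}^t(I)+\boldsymbol{v}^t(I)-(\boldsymbol\sigma^t(I)\cdot\boldsymbol{v}^t(I))\boldsymbol 1$; CFR$^+$ instead keeps $\boldsymbol{q}^t(I)$ with $\boldsymbol{q}^0(I)=\boldsymbol 0$, $\boldsymbol\sigma^t(I)=\boldsymbol{\sigma}_{\mathrm{rm}}(\boldsymbol{q}^t(I))$, $\boldsymbol{q}^{t+1}(I)=(\boldsymbol{q}^t(I)+\boldsymbol{v}^t(I)-(\boldsymbol\sigma^t(I)\cdot\boldsymbol{v}^t(I))\boldsymbol 1)^+$. In both, the update values are $\boldsymbol{v}^t(I)=\boldsymbol{v}^{(\sigma^t_1,\sigma^t_2)}(I)$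 if $I$ belongs to Player 1 and $\boldsymbol{v}^t(I)=\boldsymbol{v}^{(\sigma^{t+1}_1,\sigma^t_2)}(I)$ if $I$ belongs to Player 2 (so Player 1's new strategy $\sigma^{t+1}_1$ is computed first). *)

(* Defs.v *)
From HB Require Import structures.
From mathcomp Require Import all_boot all_order all_algebra.
Set Implicit Arguments. Unset Strict Implicit. Unset Printing Implicit Defensive.
Import Order.TTheory GRing.Theory Num.Theory.
Local Open Scope ring_scope.

Inductive plr := P1 | P2 | Chance.

Definition plr_eqb (x y : plr) : bool :=
  match x, y with
  | P1, P1 | P2, P2 | Chance, Chance => true
  | _, _ => false
  end.

(* A game is given on the set of all action sequences [seq nat]; an action at
   history h is an index a < nact h.  The actual game tree consists of the
   [valid] histories.  A valid history h is terminal iff nact h = 0.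
   - player h   : acting player at a nonterminal h,
   - chp h a    : chance probability of action a at a chance node h,
   - info h     : label of the information set containing the decision node h,
   - owner I, na I : the player owning and the number of actions of label I,
   - u1 z       : utility of player 1 at terminal z (u2 = - u1),
   - depth      : a bound on the length of histories (finiteness). *)
Record game (R : realFieldType) := Game {
  nact : seq nat -> nat;
  player : seq nat -> plr;
  chp : seq nat -> nat -> R;
  info : seq nat -> nat;
  owner : nat -> plr;
  na : nat -> nat;
  u1 : seq nat -> R;
  depth : nat }.

Section Game.
Variables (R : realFieldType) (G : game R).

Definition valid (h : seq nat) : bool :=
  all (fun k => nth 0%N h k < nact G (take k h))%N (iota 0 (size h)).

Definition decision (h : seq nat) : bool :=
  [&& valid h, (0 < nact G h)%N & ~~ plr_eqb (player G h) Chance].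

Definition own_seq (p : plr) (h : seq nat) : seq (nat * nat) :=
  [seq (info G (take k h), nth 0%N h k) | k <- iota 0 (size h) &
     plr_eqb (player G (take k h)) p].

Definition wf_game : Prop :=
  (forall h, valid h -> size h = depth G -> nact G h = 0%N) /\
  (forall h, valid h -> (0 < nact G h)%N -> player G h = Chance ->
     (forall a, (a < nact G h)%N -> 0 <= chp G h a) /\
     \sum_(a < nact G h) chp G h a = 1) /\
  (forall h, decision h ->
     owner G (info G h) = player G h /\ na G (info G h) = nact G h) /\
  (* perfect recall *)
  (forall h h', decision h -> decision h' -> info G h = info G h' ->
     own_seq (player G h) h = own_seq (player G h) h').

Definition is_infoset (I : nat) : Prop :=
  exists h, decision h /\ info G h = I.

Fixpoint hists_from (n : nat) (h : seq nat) : seq (seq nat) :=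
  h :: (if n is n'.+1 then
          flatten [seq hists_from n' (rcons h a) | a <- iota 0 (nact G h)]
        else [::]).

Definition nodes : seq (seq nat) := hists_from (depth G) [::].
Definition terminals : seq (seq nat) := [seq z <- nodes | nact G z == 0%N].

(* strategies (for a player): information-set label -> action -> probability *)
Definition strat := nat -> nat -> R.

Definition act_prob (s : strat * strat) (h : seq nat) (a : nat) : R :=
  match player G h with
  | P1 => s.1 (info G h) a
  | P2 => s.2 (info G h) a
  | Chance => chp G h a
  end.

Definition reach_opp (s : strat * strat) (p : plr) (z : seq nat) : R :=
  \prod_(k < size z | ~~ plr_eqb (player G (take k z)) p)
     act_prob s (take k z) (nth 0%N z k).

Definition reach_own_from (s : strat * strat) (p : plr) (h z : seq nat) : R :=
  \prod_(size h <= k < size z | plr_eqb (player G (take k z)) p)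
     act_prob s (take k z) (nth 0%N z k).

Definition util (p : plr) (z : seq nat) : R :=
  if p is P2 then - u1 G z else u1 G z.

Definition cfv (p : plr) (s : strat * strat) (h : seq nat) : R :=
  \sum_(z <- terminals | prefix h z)
     reach_opp s p z * reach_own_from s p h z * util p z.

Definition cfvI (s : strat * strat) (I : nat) (a : nat) : R :=
  \sum_(h <- nodes | decision h && (info G h == I))
     cfv (owner G I) s (rcons h a).

Definition rm (n : nat) (x : nat -> R) : nat -> R :=
  fun a => if [exists b : 'I_n, 0 < x b]
           then Num.max (x a) 0 / \sum_(b < n) Num.max (x b) 0
           else n%:R^-1.

Definition table := nat -> nat -> R.

Definition strat_of (r : table) : strat := fun I => rm (na G I) (r I).

(* update of the regrets (plus = false: CFR) or of q (plus = true: CFR+)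
   at all information sets of player p, with update values computed
   under the profile s *)
Definition update (plus : bool) (p : plr) (r : table) (s : strat * strat)
  : table :=
  fun I a =>
    if plr_eqb (owner G I) p then
      let v := cfvI s I in
      let base := \sum_(b < na G I) strat_of r I b * v b in
      let y := r I a + v a - base in
      if plus then Num.max y 0 else y
    else r I a.

Fixpoint cfr (plus : bool) (t : nat) : table * table :=
  match t with
  | 0%N => (fun _ _ => 0, fun _ _ => 0)
  | t'.+1 =>
      let r := cfr plus t' in
      let s1 := strat_of r.1 in
      let s2 := strat_of r.2 in
      let r1' := update plus P1 r.1 (s1, s2) in
      let r2' := update plus P2 r.2 (strat_of r1', s2) in
      (r1', r2')
  end.

Definition sigma (plus : bool) (t : nat) (p : plr) : strat :=
  strat_of (if p is P2 then (cfr plus t).2 else (cfr plus t).1).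

Definition opp_strat (plus : bool) (t : nat) (p : plr) : strat :=
  if p is P2 then sigma plus t.+1 P1 else sigma plus t P2.

Definition with_player (p : plr) (sp so : strat) : strat * strat :=
  if p is P2 then (so, sp) else (sp, so).

End Game.

(* Main.v *)
Require Import Defs.
From mathcomp Require Import all_boot all_order all_algebra zify ring lra.
Set Implicit Arguments. Unset Strict Implicit. Unset Printing Implicit Defensive.
Import Order.TTheory GRing.Theory Num.Theory.
Local Open Scope ring_scope.

Section Basics.
Variables (R : realFieldType) (G : game R).

Lemma validP h : reflect (forall k, (k < size h)%N -> (nth 0%N h k < nact G (take k h))%N) (valid G h).
Proof.
apply: (iffP allP) => H k.
  by move=> Hk; apply: H; rewrite mem_iota add0n.
by rewrite mem_iota add0n => /andP[_ /H].
Qed.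

Lemma take_rcons_lt (h : seq nat) x k : (k < size h)%N ->
  take k (rcons h x) = take k h /\ nth 0%N (rcons h x) k = nth 0%N h k.
Proof. by move=> Hk; rewrite -cats1 takel_cat ?(ltnW Hk) // nth_cat Hk. Qed.

Lemma take_rcons_size (h : seq nat) x : take (size h) (rcons h x) = h.
Proof. by rewrite -cats1 take_size_cat. Qed.

Lemma nth_rcons_size (h : seq nat) x : nth 0%N (rcons h x) (size h) = x.
Proof. by rewrite nth_rcons ltnn eqxx. Qed.

Lemma mem_hists n h0 x : x \in hists_from G n h0 <->
  exists s, [/\ x = h0 ++ s, (size s <= n)%N &
    forall k, (k < size s)%N -> (nth 0%N s k < nact G (h0 ++ take k s))%N].
Proof.
elim: n h0 x => [|n IH] h0 x /=.
  rewrite inE; split=> [/eqP->|[s [-> Hs _]]]; first by exists [::]; rewrite cats0.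
  by move: Hs; rewrite leqn0 => /nilP->; rewrite cats0.
rewrite inE; split.
  case/orP=> [/eqP->|]; first by exists [::]; rewrite cats0.
  case/flattenP=> l /mapP[a Ha ->] /IH[s [-> Hs Hk]].
  exists (a :: s); split => //; first by rewrite cat_rcons.
  case=> [|k] /=; first by rewrite cats0; move: Ha; rewrite mem_iota.
  by rewrite ltnS => /Hk; rewrite cat_rcons.
case=> [[|a s]] [-> Hs Hk]; first by rewrite cats0 eqxx.
apply/orP; right; apply/flattenP; exists (hists_from G n (rcons h0 a)).
  apply/mapP; exists a => //; rewrite mem_iota /=.
  by have := Hk 0%N isT; rewrite take0 cats0.
apply/IH; exists s; split => //; first by rewrite cat_rcons.
by move=> k Hk'; have := Hk k.+1 Hk'; rewrite /= cat_rcons.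
Qed.

Lemma mem_nodes x : x \in nodes G <-> valid G x /\ (size x <= depth G)%N.
Proof.
rewrite /nodes mem_hists; split.
  case=> s [-> Hs Hk]; split => //; apply/validP => k Hk'.
  by have := Hk k Hk'.
case=> /validP Hv Hs; exists x; split => // k Hk.
Qed.

Lemma uniq_flatten_map (T1 T2 : eqType) (F : T1 -> seq T2) (s : seq T1) :
  uniq s -> (forall a, a \in s -> uniq (F a)) ->
  (forall a b x, a \in s -> b \in s -> x \in F a -> x \in F b -> a = b) ->
  uniq (flatten (map F s)).
Proof.
elim: s => //= a s IH /andP[Has Hs] HF Hd.
rewrite cat_uniq HF ?inE ?eqxx //= IH //; last first.
- by move=> a' b' x Ha' Hb'; apply: Hd; rewrite inE ?Ha' ?Hb' orbT.
- by move=> a' Ha'; apply: HF; rewrite inE Ha' orbT.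
rewrite andbT; apply/hasPn => x /flattenP[l /mapP[b Hb ->]] Hxb; apply/negP => Hxa.
have Hb' : b \in a :: s by rewrite inE Hb orbT.
have Eab := Hd a b x (mem_head _ _) Hb' Hxa Hxb.
by move: Has; rewrite Eab Hb.
Qed.

Lemma uniq_hists n h0 : uniq (hists_from G n h0).
Proof.
elim: n h0 => [|n IH] h0 //=.
apply/andP; split.
  apply/negP => /flattenP[l /mapP[a _ ->]] /mem_hists[s [E _ _]].
  by have := congr1 size E; rewrite size_cat size_rcons; lia.
apply: uniq_flatten_map => //; first exact: iota_uniq.
move=> a b x _ _ /mem_hists[s [-> _ _]] /mem_hists[s' [E _ _]].
have := congr1 (fun l => nth 0%N l (size h0)) E.
by rewrite !nth_cat !size_rcons ltnSn !nth_rcons_size.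
Qed.

Lemma uniq_nodes : uniq (nodes G).
Proof. exact: uniq_hists. Qed.

Lemma mem_terminals z : z \in terminals G ->
  [/\ valid G z, (size z <= depth G)%N & nact G z = 0%N].
Proof. by rewrite mem_filter => /andP[/eqP H /mem_nodes[]]. Qed.

Lemma valid_take z k : valid G z -> valid G (take k z).
Proof.
move=> /validP Hv; apply/validP => j Hj.
have Hjk : (j < k)%N by move: Hj; rewrite size_take; case: ifP => // /negbT; lia.
have Hjz : (j < size z)%N by move: Hj; rewrite size_take; case: ifP => //; lia.
by rewrite nth_take // take_takel ?(ltnW Hjk) //; apply: Hv.
Qed.

Lemma os_rcons p h x : own_seq G p (rcons h x) = own_seq G p h ++
  (if plr_eqb (player G h) p then [:: (info G h, x)] else [::]).
Proof.
rewrite /own_seq size_rcons -addn1 iotaD add0n filter_cat map_cat /=.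
congr (_ ++ _).
  rewrite (@eq_in_filter _ _ (fun k => plr_eqb (player G (take k h)) p)); last first.
    by move=> k; rewrite mem_iota add0n => /andP[_ /(take_rcons_lt x)[-> _]].
  apply/eq_in_map => k; rewrite mem_filter mem_iota add0n.
  by case/andP=> _ /andP[_ /(take_rcons_lt x)[-> ->]].
by rewrite take_rcons_size; case: plr_eqb => /=; rewrite ?take_rcons_size ?nth_rcons_size.
Qed.

Lemma os_size p z : (size (own_seq G p z) <= size z)%N.
Proof. by rewrite /own_seq size_map size_filter (leq_trans (count_size _ _)) // size_iota. Qed.

Lemma os_cat p h s : exists D, own_seq G p (h ++ s) = own_seq G p h ++ D.
Proof.
elim/last_ind: s => [|s x [D HD]]; first by exists [::]; rewrite !cats0.
rewrite -rcons_cat os_rcons HD -catA; by eexists.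
Qed.

Lemma os_prefix p h z : prefix h z -> prefix (own_seq G p h) (own_seq G p z).
Proof. by case/prefixP=> s ->; have [D ->] := os_cat p h s; apply: prefix_prefix. Qed.

Lemma os_nth p z i : (i < size (own_seq G p z))%N ->
  exists k, [/\ (k < size z)%N, plr_eqb (player G (take k z)) p,
     own_seq G p (take k z) = take i (own_seq G p z) &
     nth (0%N, 0%N) (own_seq G p z) i = (info G (take k z), nth 0%N z k)].
Proof.
elim/last_ind: z i => [|z x IH] i; first by rewrite /own_seq.
rewrite os_rcons size_cat => Hi.
case: (ltnP i (size (own_seq G p z))) => Hiz.
  have [k [Hk Hp Ho Hn]] := IH i Hiz.
  have [E1 E2] := take_rcons_lt x Hk.
  exists k; split; rewrite ?E1 ?E2 //; first by rewrite size_rcons ltnW.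
    by rewrite takel_cat ?(ltnW Hiz).
  by rewrite nth_cat Hiz.
move: Hi; case Hp: plr_eqb => /= Hi; last by lia.
have Ei : i = size (own_seq G p z) by lia.
exists (size z); split; rewrite ?take_rcons_size ?nth_rcons_size ?size_rcons //.
  by rewrite Ei take_size_cat.
by rewrite nth_cat Ei ltnn subnn.
Qed.

Lemma os_strict p h1 h2 z : prefix h1 z -> prefix h2 z -> (size h1 < size h2)%N ->
  player G h1 = p -> (size (own_seq G p h1) < size (own_seq G p h2))%N.
Proof.
move=> H1 H2 Hs Hp.
have Ez1 : h1 = take (size h1) z by move: H1; rewrite prefixE => /eqP.
have Ez2 : h2 = take (size h2) z by move: H2; rewrite prefixE => /eqP.
have Hsz : (size h2 <= size z)%N by rewrite Ez2 size_take; case: ifP => //; lia.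
have E : rcons h1 (nth 0%N z (size h1)) = take (size h1).+1 z.
  have Hlt : (size h1 < size z)%N by lia.
  by rewrite (take_nth 0%N Hlt) -Ez1.
have : prefix (rcons h1 (nth 0%N z (size h1))) h2.
  have Hlt : (size h1 < size z)%N by lia.
  by rewrite E Ez2 prefixE size_takel // take_takel.
move/(os_prefix p); rewrite os_rcons Hp /=.
have -> : plr_eqb p p by case: p {Hp}.
by move/prefixP=> [s ->]; rewrite !size_cat /=; lia.
Qed.

Lemma plr_eqbP x y : reflect (x = y) (plr_eqb x y).
Proof. by apply: (iffP idP); case: x; case: y. Qed.

Lemma act_prob_own p sp so h a : p <> Chance -> player G h = p ->
  act_prob G (with_player p sp so) h a = sp (info G h) a.
Proof. by move=> Hp Hh; rewrite /act_prob Hh; case: p Hp {Hh}. Qed.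

Lemma reach_opp_indep p sp sp' so z : p <> Chance ->
  reach_opp G (with_player p sp so) p z = reach_opp G (with_player p sp' so) p z.
Proof.
move=> Hp; apply: eq_bigr => k; rewrite /act_prob; move: (info G _) (nth 0%N z k).
by case: (player G (take k z)); case: p Hp.
Qed.

Lemma ro_rcons s p h z x : (size h <= size z)%N ->
  reach_own_from G s p h (rcons z x) =
  reach_own_from G s p h z * (if plr_eqb (player G z) p then act_prob G s z x else 1).
Proof.
move=> Hs; rewrite /reach_own_from size_rcons big_mkcond big_nat_recr //= [in RHS]big_mkcond.
rewrite take_rcons_size nth_rcons_size; congr (_ * _).
apply: eq_big_nat => k /andP[_ Hk]; by have [-> ->] := take_rcons_lt x Hk.
Qed.

Lemma ro_os p sp so h z : p <> Chance -> prefix h z ->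
  reach_own_from G (with_player p sp so) p h z =
  \prod_(e <- drop (size (own_seq G p h)) (own_seq G p z)) sp e.1 e.2.
Proof.
move=> Hp /prefixP[s ->]; elim/last_ind: s => [|s x IH].
  by rewrite cats0 drop_size big_nil /reach_own_from big_geq.
rewrite -rcons_cat ro_rcons ?size_cat ?leq_addr // IH os_rcons.
have [D HD] := os_cat p h s.
rewrite HD -catA !drop_size_cat // big_cat /=.
case: plr_eqbP => Hpl; last by rewrite big_nil.
by rewrite big_cons big_nil mulr1 act_prob_own.
Qed.

Lemma decision_take z k : valid G z -> (k < size z)%N -> player G (take k z) <> Chance ->
  decision G (take k z).
Proof.
move=> Hv Hk Hc; rewrite /decision valid_take //=.
have H0 := validP _ Hv k Hk; have -> : (0 < nact G (take k z))%N by lia.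
by case: (player G _) Hc.
Qed.
End Basics.

Lemma plr_eqb_refl x : plr_eqb x x. Proof. by case: x. Qed.

Lemma prefix_take (T : eqType) (z : seq T) k : prefix (take k z) z.
Proof. by rewrite -{2}(cat_take_drop k z) prefix_prefix. Qed.

Lemma prefix_rconsE (T : eqType) (L s : seq T) e x0 :
  prefix (rcons L e) s = [&& prefix L s, (size L < size s)%N & nth x0 s (size L) == e].
Proof.
apply/idP/and3P.
  case/prefixP=> s' ->; rewrite -cats1 -catA prefix_prefix size_cat /= nth_cat ltnn subnn /=.
  by split => //; lia.
case=> /prefixP[s' ->] Hs /eqP He.
case: s' Hs He => [|x s'] Hs He; first by rewrite cats0 in Hs; lia.
rewrite nth_cat ltnn subnn /= in He.
by rewrite He -cat_rcons prefix_prefix.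
Qed.

Section WDef.
Variables (R : realFieldType) (G : game R) (Hwf : wf_game G) (p : plr)
  (Hp : p <> Chance) (so : strat R).

Definition wgt z := reach_opp G (with_player p (fun _ _ => 0) so) p z * util G p z.

Definition W (sp : strat R) (L : seq (nat * nat)) : R :=
  \sum_(z <- terminals G | prefix L (own_seq G p z))
     wgt z * \prod_(e <- drop (size L) (own_seq G p z)) sp e.1 e.2.

Lemma cfvI_W sp J b h0 : decision G h0 -> info G h0 = J -> player G h0 = p ->
  cfvI G (with_player p sp so) J b = W sp (rcons (own_seq G p h0) (J, b)).
Proof.
move=> Hd0 Hi0 Hp0.
have [_ [_ [Hown Hpr]]] := Hwf.
have HoJ : owner G J = p by rewrite -Hi0 (Hown _ Hd0).1.
set sJ := own_seq G p h0.
have HJ : forall h, decision G h -> info G h == J ->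
    player G h = p /\ own_seq G p h = sJ.
  move=> h Hd /eqP Hi.
  have Ph : player G h = p by rewrite -(Hown _ Hd).1 Hi HoJ.
  split => //; rewrite /sJ -Ph; apply: Hpr => //; by rewrite Hi Hi0.
rewrite /cfvI HoJ /cfv.
rewrite (eq_bigr (fun h => \sum_(z <- terminals G | prefix (rcons h b) z)
   wgt z * \prod_(e <- drop (size sJ).+1 (own_seq G p z)) sp e.1 e.2)); last first.
  move=> h /andP[Hd Hi]; have [Ph Oh] := HJ h Hd Hi.
  apply: eq_bigr => z Hz.
  rewrite ro_os // os_rcons Ph Oh plr_eqb_refl size_cat addn1 /wgt.
  by rewrite (@reach_opp_indep _ _ _ _ (fun _ _ => 0)) // mulrAC.
rewrite (exchange_big_dep predT) //=.
rewrite /W big_mkcond /= [in RHS]big_mkcond /=.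
apply: eq_big_seq => z Hz.
have [Hvz Hsz _] := mem_terminals Hz.
rewrite big_const_seq size_rcons.
case: ifP => Hpre.
  have [s2 Es] := prefixP Hpre.
  have Hi : (size sJ < size (own_seq G p z))%N by rewrite Es size_cat size_rcons; lia.
  have [k [Hk Pk Ok Nk]] := os_nth Hi.
  rewrite Es -cats1 -catA take_size_cat // in Ok.
  rewrite Es nth_cat size_rcons ltnSn nth_rcons ltnn eqxx in Nk.
  case: Nk => Ik Bk.
  move/plr_eqbP: Pk => Pk.
  have Hpk : prefix (take k z) z := prefix_take z k.
  have Hsk : size (take k z) = k by rewrite size_takel // ltnW.
  rewrite (@eq_in_count _ _ (pred1 (take k z))); last first.
    move=> h Hh /=; apply/idP/eqP.
      case/andP=> [/andP[Hd Hi'] Hpz]; have [Ph Oh] := HJ h Hd Hi'.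
      have Hhz : prefix h z by move: Hpz; rewrite -cats1 => /catl_prefix.
      have Ehz : h = take (size h) z by move: Hhz; rewrite prefixE => /eqP.
      case: (ltngtP (size h) k) => Hc.
      - have := os_strict (G:=G) (p:=p) Hhz Hpk; rewrite Hsk Oh Ok => /(_ Hc Ph); lia.
      - have := os_strict (G:=G) (p:=p) Hpk Hhz; rewrite Hsk Oh Ok => /(_ Hc Pk); lia.
      - by rewrite Ehz Hc.
    move=> ->; rewrite decision_take ?Pk //= -Ik eqxx /= Bk -take_nth //.
    exact: prefix_take.
  rewrite count_uniq_mem ?uniq_nodes //.
  have -> : take k z \in nodes G.
    apply/mem_nodes; split; first exact: valid_take.
    apply: leq_trans Hsz; rewrite size_take; case: ifP => //; lia.
  by rewrite /= addr0.
rewrite (@eq_in_count _ _ pred0) ?count_pred0 //.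
move=> h Hh /=; apply/negP => /andP[/andP[Hd Hi'] Hpz].
have [Ph Oh] := HJ h Hd Hi'.
move: (os_prefix G p Hpz); rewrite os_rcons Ph Oh plr_eqb_refl (eqP Hi') cats1.
by rewrite Hpre.
Qed.


Definition Js (L : seq (nat * nat)) := undup [seq (nth (0%N, 0%N) (own_seq G p z) (size L)).1 |
  z <- terminals G & prefix L (own_seq G p z) && (size L < size (own_seq G p z))%N].

Lemma Js_spec L J : J \in Js L -> exists h0,
  [/\ decision G h0, info G h0 = J, player G h0 = p & own_seq G p h0 = L].
Proof.
rewrite mem_undup => /mapP[z]; rewrite mem_filter => /andP[/andP[Hpre Hlt] Hz] ->.
have [Hvz _ _] := mem_terminals Hz.
have [k [Hk Pk Ok Nk]] := os_nth Hlt.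
move/plr_eqbP: Pk => Pk.
exists (take k z); split => //; first by apply: decision_take => //; rewrite Pk.
  by rewrite Nk.
by rewrite Ok; move: Hpre; rewrite prefixE => /eqP.
Qed.

Lemma e_spec (L : seq (nat * nat)) z : z \in terminals G -> (size L < size (own_seq G p z))%N ->
  let e := nth (0%N, 0%N) (own_seq G p z) (size L) in (e.2 < na G e.1)%N.
Proof.
move=> Hz Hlt /=.
have [Hvz _ _] := mem_terminals Hz.
have [_ [_ [Hown _]]] := Hwf.
have [k [Hk Pk Ok Nk]] := os_nth Hlt.
move/plr_eqbP: Pk => Pk.
have Hd : decision G (take k z) by apply: decision_take => //; rewrite Pk.
rewrite Nk /= (Hown _ Hd).2.
exact: validP _ Hvz k Hk.
Qed.

Lemma W_big sp (L : seq (nat * nat)) : (depth G < size L)%N -> W sp L = 0.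
Proof.
move=> HL; rewrite /W big1_seq // => z /andP[Hpre Hz].
have [_ Hsz _] := mem_terminals Hz.
have H2 := os_size G p z; move: Hpre; rewrite prefixE => /eqP E.
have : (size (take (size L) (own_seq G p z)) <= size (own_seq G p z))%N by rewrite size_take; case: ifP => //; lia.
move=> H1; exfalso; rewrite E in H1.
have := leq_ltn_trans (leq_trans H1 (leq_trans H2 Hsz)) HL; by rewrite ltnn.
Qed.

Lemma W_rec sp L : W sp L =
  \sum_(z <- terminals G | own_seq G p z == L) wgt z +
  \sum_(J <- Js L) \sum_(b < na G J) sp J b * W sp (rcons L (J, nat_of_ord b)).
Proof.
rewrite /W (bigID (fun z => size L < size (own_seq G p z))%N) /= addrC.
congr (_ + _).
  rewrite (eq_bigl (fun z => own_seq G p z == L)); last first.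
    move=> z /=; apply/andP/eqP.
      case; rewrite prefixE => /eqP E; rewrite -ltnNge ltnS => Hs.
      by rewrite -E take_oversize.
    by move=> ->; rewrite prefix_refl ltnn.
  by apply: eq_bigr => z /eqP ->; rewrite drop_size big_nil mulr1.
pose g z := wgt z * \prod_(e <- drop (size L) (own_seq G p z)) sp e.1 e.2.
pose ez z := nth (0%N, 0%N) (own_seq G p z) (size L).
pose Q z := prefix L (own_seq G p z) && (size L < size (own_seq G p z))%N.
transitivity (\sum_(J <- Js L) \sum_(b < na G J)
   \sum_(z <- terminals G | Q z) (ez z == (J, nat_of_ord b))%:R * g z); last first.
  apply: eq_bigr => J _; apply: eq_bigr => b _.
  rewrite /W mulr_sumr size_rcons big_mkcond [in RHS]big_mkcond.
  apply: eq_bigr => z _.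
  rewrite (prefix_rconsE _ _ _ (0%N, 0%N)) /Q -/(ez z).
  case: (prefix L _) => /=; last by [].
  case: ltnP => Hlt /=; last by [].
  case: eqP => He /=; last by rewrite mul0r.
  rewrite mul1r /g (drop_nth (0%N, 0%N) Hlt) big_cons -/(ez z) He /=.
  by rewrite mulrCA.
rewrite (eq_bigr (fun J => \sum_(z <- terminals G | Q z) \sum_(b < na G J)
   (ez z == (J, nat_of_ord b))%:R * g z)); last by move=> J _; rewrite exchange_big.
rewrite exchange_big /=.
rewrite big_mkcond [in RHS]big_mkcond /=.
apply: eq_big_seq => z Hz; rewrite /Q; case: ifP => // HQ.
transitivity ((\sum_(J <- Js L) \sum_(b < na G J) ((ez z == (J, nat_of_ord b))%:R : R)) * g z); last first.
  by rewrite mulr_suml; apply: eq_bigr => J _; rewrite mulr_suml.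
suff -> : \sum_(J <- Js L) \sum_(b < na G J) ((ez z == (J, nat_of_ord b))%:R : R) = 1 by rewrite mul1r.
have HJ : (ez z).1 \in Js L.
  rewrite mem_undup; apply/mapP; exists z => //; rewrite mem_filter Hz andbT //.
have Hb : ((ez z).2 < na G (ez z).1)%N.
  by move: HQ => /andP[_ Hlt]; exact: e_spec Hz Hlt.
rewrite (bigD1_seq (ez z).1) ?undup_uniq //=.
rewrite [X in _ + X]big1_seq ?addr0; last first.
  move=> J /andP[HJ' _]; apply: big1 => b _.
  by case: eqP => // E; move: HJ'; rewrite E /= eqxx.
rewrite (bigD1 (Ordinal Hb)) //= big1 ?addr0.
  by rewrite -surjective_pairing eqxx.
move=> b /eqP Hb'; case: eqP => // E; exfalso; apply: Hb'.
apply: val_inj => /=; have /= -> := congr1 snd E; by [].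
Qed.

Lemma W_mono (old new : strat R) :
  (forall J b, 0 <= new J b) ->
  (forall J, (exists h0, [/\ decision G h0, info G h0 = J & player G h0 = p]) ->
     \sum_(b < na G J) old J b * cfvI G (with_player p old so) J b <=
     \sum_(b < na G J) new J b * cfvI G (with_player p old so) J b) ->
  forall L, W old L <= W new L.
Proof.
move=> Hnn Hloc.
suff H : forall n L, (depth G < size L + n)%N -> W old L <= W new L.
  by move=> L; apply: (H (depth G).+1); lia.
elim=> [|n IH] L HL.
  rewrite !W_big //; lia.
rewrite (W_rec old) (W_rec new) lerD2l.
rewrite big_seq [X in _ <= X]big_seq; apply: ler_sum => J HJ.
have [h0 [Hd Hi Hpl Ho]] := Js_spec HJ.
have Hex : exists h0, [/\ decision G h0, info G h0 = J & player G h0 = p] by exists h0.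
have Hl := Hloc J Hex.
have E : forall b, cfvI G (with_player p old so) J b = W old (rcons L (J, b)).
  by move=> b; rewrite (cfvI_W old b Hd Hi Hpl) Ho.
have E1 : \sum_(b < na G J) old J b * cfvI G (with_player p old so) J b =
          \sum_(b < na G J) old J b * W old (rcons L (J, nat_of_ord b)).
  by apply: eq_bigr => b _; rewrite E.
have E2 : \sum_(b < na G J) new J b * cfvI G (with_player p old so) J b =
          \sum_(b < na G J) new J b * W old (rcons L (J, nat_of_ord b)).
  by apply: eq_bigr => b _; rewrite E.
rewrite E1 E2 in Hl; apply: (le_trans Hl).
apply: ler_sum => b _; apply: ler_wpM2l => //; apply: IH; rewrite size_rcons; lia.
Qed.
End WDef.

Section RM.
Variable R : realFieldType.

Lemma maxr0_ge0 (x : R) : 0 <= Num.max x 0.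
Proof. by rewrite le_max lexx orbT. Qed.

Lemma rm_ge0 n (x : nat -> R) a : 0 <= rm n x a.
Proof.
rewrite /rm; case: ifP => _; last by rewrite invr_ge0 ler0n.
by apply: divr_ge0; [apply: maxr0_ge0 | apply: sumr_ge0 => b _; apply: maxr0_ge0].
Qed.

Lemma rm_max n (x : nat -> R) a : rm n (fun b => Num.max (x b) 0) a = rm n x a.
Proof.
have E : forall y : R, Num.max (Num.max y 0) 0 = Num.max y 0.
  by move=> y; rewrite -maxA maxxx.
rewrite /rm /= E.
rewrite (eq_bigr (fun b : 'I_n => Num.max (x b) 0)); last by move=> b _; rewrite E.
have -> : [exists b : 'I_n, 0 < Num.max (x b) 0] = [exists b : 'I_n, 0 < x b].
  by apply: eq_existsb => b; rewrite lt_max ltxx orbF.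
by [].
Qed.

Lemma max_case (a : R) : (0 <= a /\ Num.max a 0 = a) \/ (a < 0 /\ Num.max a 0 = 0).
Proof.
case: (leP 0 a) => h; first by left; split => //; rewrite max_l.
by right; split => //; rewrite max_r // ltW.
Qed.

Lemma pw (x y : R) : Num.max x 0 * (y - x) <= Num.max y 0 * (y - x).
Proof.
case: (max_case x) => [[hx ->]|[hx ->]]; case: (max_case y) => [[hy ->]|[hy ->]].
- have := sqr_ge0 (y - x); nra.
- nra.
- nra.
- nra.
Qed.

Lemma rm_sum n (x : nat -> R) : (0 < n)%N -> \sum_(b < n) rm n x b = 1.
Proof.
move=> Hn; rewrite /rm; case: (boolP [exists b : 'I_n, 0 < x b]) => H.
  have HS : \sum_(b < n) Num.max (x b) 0 != 0; last first.
    by rewrite -(divff HS) mulr_suml.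
  case/existsP: H => b Hb; apply: lt0r_neq0.
  apply: (lt_le_trans (_ : 0 < Num.max (x b) 0)); first by rewrite lt_max Hb.
  rewrite (bigD1 b) //= lerDl; apply: sumr_ge0 => i _; apply: maxr0_ge0.
rewrite sumr_const card_ord -[_ *+ n]mulr_natr mulVf //.
by rewrite pnatr_eq0 -lt0n.
Qed.

Lemma rm_improve n (x v : nat -> R) (plus : bool) base :
  base = \sum_(b < n) rm n x b * v b ->
  base <= \sum_(b < n) rm n (fun a => if plus then Num.max (x a + v a - base) 0
                                    else x a + v a - base) b * v b.
Proof.
move=> Hbase.
pose s := rm n x.
pose y := fun a => x a + v a - base.
pose s' := rm n (fun a => if plus then Num.max (y a) 0 else y a).
rewrite -/s'.
have Es' : forall a, s' a = rm n y a.
  by move=> a; rewrite /s'; case: plus {s'} => //; rewrite rm_max.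
case: (posnP n) => [Hn0|Hn].
  by rewrite Hbase; subst n; rewrite !big_ord0.
pose D b := v b - base.
have HD : forall b, D b = y b - x b by move=> b; rewrite /D /y; ring.
suff : 0 <= \sum_(b < n) s' b * D b.
  rewrite /D; under eq_bigr do rewrite mulrBr.
  rewrite sumrB -mulr_suml.
  have -> : \sum_(i < n) s' i = 1 by under eq_bigr do rewrite Es'; rewrite rm_sum.
  by rewrite mul1r subr_ge0.
have F1 : \sum_(b < n) s b * D b = 0.
  rewrite /D; under eq_bigr do rewrite mulrBr.
  rewrite sumrB -mulr_suml.
  have -> : \sum_(i < n) s i = 1 by rewrite rm_sum.
  by rewrite mul1r Hbase subrr.
pose X b := Num.max (x b) 0.
pose Y b := Num.max (y b) 0.
have HXD : 0 <= \sum_(b < n) X b * D b.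
  case Hx: [exists b : 'I_n, 0 < x b].
    have : \sum_(b < n) s b * D b = (\sum_(b < n) X b * D b) / \sum_(b < n) X b.
      rewrite mulr_suml; apply: eq_bigr => b _.
      by rewrite /s /rm Hx /X mulrAC.
    rewrite F1 => /esym /eqP; rewrite mulf_eq0 invr_eq0 => /orP[/eqP -> //|/eqP HS].
    case/existsP: Hx => b Hb.
    have : 0 < \sum_(b < n) X b.
      apply: (lt_le_trans (_ : 0 < X b)); first by rewrite lt_max Hb.
      rewrite (bigD1 b) //= lerDl; apply: sumr_ge0 => i _; apply: maxr0_ge0.
    by rewrite HS ltxx.
  rewrite big1 // => b _; rewrite /X max_r ?mul0r //.
  by move/negbT: Hx; rewrite negb_exists => /forallP /(_ b); rewrite -leNgt.
have HYD : 0 <= \sum_(b < n) Y b * D b.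
  apply: (le_trans HXD); apply: ler_sum => b _; rewrite HD; exact: pw.
case Hy: [exists b : 'I_n, 0 < y b].
  have -> : \sum_(b < n) s' b * D b = (\sum_(b < n) Y b * D b) / \sum_(b < n) Y b.
    rewrite mulr_suml; apply: eq_bigr => b _.
    by rewrite Es' /rm Hy /Y mulrAC.
  by apply: divr_ge0 => //; apply: sumr_ge0 => b _; apply: maxr0_ge0.
case Hx: [exists b : 'I_n, 0 < x b].
  exfalso.
  have HXy : \sum_(b < n) X b * y b = \sum_(b < n) X b * x b + \sum_(b < n) X b * D b.
    rewrite -big_split; apply: eq_bigr => b _ /=; rewrite HD; move: (X b) (y b) (x b) => u1 u2 u3; ring.
  have HXx : 0 < \sum_(b < n) X b * x b.
    case/existsP: Hx => b Hb.
    rewrite (bigD1 b) //=; apply: ltr_pwDl.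
      by rewrite /X max_l ?ltW // mulr_gt0.
    apply: sumr_ge0 => i _; rewrite /X.
    case: (max_case (x i)) => [[hx ->]|[hx ->]]; nra.
  have HXy0 : \sum_(b < n) X b * y b <= 0.
    apply: sumr_le0 => b _.
    have : y b <= 0 by move/negbT: Hy; rewrite negb_exists => /forallP /(_ b); rewrite -leNgt.
    have := maxr0_ge0 (x b); rewrite /X; nra.
  move: HXy0; rewrite HXy; lra.
have Ess : forall b, s' b = s b.
  by move=> b; rewrite Es' /s /rm Hx Hy.
by under eq_bigr do rewrite Ess; rewrite F1.
Qed.
End RM.

Theorem lemma3 (R : realFieldType) (G : game R) (plus : bool) (t : nat)
  (p : plr) (I a : nat) :
  wf_game G -> p <> Chance -> is_infoset G I -> owner G I = p ->
  (a < na G I)%N ->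
  cfvI G (with_player p (sigma G plus t p) (opp_strat G plus t p)) I a <=
  cfvI G (with_player p (sigma G plus t.+1 p) (opp_strat G plus t p)) I a.
Proof.
move=> Hwf Hp [h0 [Hd0 Hi0]] HoI Ha.
have [_ [_ [Hown Hpr]]] := Hwf.
have Hp0 : player G h0 = p by rewrite -(Hown _ Hd0).1 Hi0.
rewrite (cfvI_W Hwf Hp _ _ a Hd0 Hi0 Hp0) (cfvI_W Hwf Hp _ _ a Hd0 Hi0 Hp0).
have key : forall (r : table R) (s : strat R * strat R) J, owner G J = p ->
    \sum_(b < na G J) strat_of G r J b * cfvI G s J b <=
    \sum_(b < na G J) strat_of G (update G plus p r s) J b * cfvI G s J b.
  move=> r s J HoJ; rewrite /strat_of /update HoJ plr_eqb_refl /=.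
  exact: rm_improve.
apply: (W_mono Hwf Hp).
  by move=> J b; rewrite /sigma /strat_of; apply: rm_ge0.
move=> J [h [Hd Hi Hpl]].
have HoJ : owner G J = p by rewrite -Hi (Hown _ Hd).1.
by move: key; case: p Hp HoI HoJ {Hp0 Hpl} => // _ _ HoJ key; apply: key.
Qed.
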